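(* For each $k\in\mathbb{N}$, the set $\mathcal{A}_k=\{K\in\mathcal{K}^2_*: \mathrm{conv}\,\mathcal{M}_K \text{ has at most } k \text{ exposed points}\}$ is closed in $\mathcal{K}^2_*$.
   Context: $\mathcal{K}^2_*$ is the set of strictly convex bodies (nonempty compact convex subsets of $\mathbb{R}^2$ whose boundary contains no nondegenerate segment), with the Hausdorff metric. For $K\in\mathcal{K}^2_*$ and $u\in\mathbb{S}^1$, $x_K(u)$ is the unique point of $K$ on its supporting line with outer unit normal $u$, $m_K(u)=\frac12[x_K(u)+x_K(-u)]$, and the middle hedgehog is $\mathcal{M}_K=\{m_K(u):u\in\mathbb{S}^1\}$. *)

(* Defs.v *)
From Stdlib Require Import Reals List.
Open Scope R_scope.

Definition pt := (R * R)%type.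
Definition pset := pt -> Prop.

Definition dot (x y : pt) : R := fst x * fst y + snd x * snd y.
Definition padd (x y : pt) : pt := (fst x + fst y, snd x + snd y).
Definition pscale (a : R) (x : pt) : pt := (a * fst x, a * snd x).
Definition popp (x : pt) : pt := (- fst x, - snd x).
Definition dist2 (x y : pt) : R :=
  sqrt ((fst x - fst y)^2 + (snd x - snd y)^2).

Definition unit_vec (u : pt) : Prop := dot u u = 1.

Definition is_convex (K : pset) : Prop :=
  forall x y t, K x -> K y -> 0 <= t <= 1 ->
    K (padd (pscale (1 - t) x) (pscale t y)).

Definition is_closed (K : pset) : Prop :=
  forall x, (forall eps, 0 < eps -> exists y, K y /\ dist2 x y < eps) -> K x.

Definition is_bounded (K : pset) : Prop :=
  exists r, forall x, K x -> dist2 x (0,0) <= r.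

(* compact subsets of R^2 = closed and bounded (Heine-Borel) *)
Definition is_compact (K : pset) : Prop := is_closed K /\ is_bounded K.

Definition is_nonempty (K : pset) : Prop := exists x, K x.

Definition convex_body (K : pset) : Prop :=
  is_nonempty K /\ is_compact K /\ is_convex K.

(* topological boundary (K closed, so boundary points lie in K) *)
Definition boundary (K : pset) : pset :=
  fun x => K x /\ forall eps, 0 < eps -> exists y, dist2 x y < eps /\ ~ K y.

Definition segment (a b : pt) : pset :=
  fun z => exists t, 0 <= t <= 1 /\ z = padd (pscale (1 - t) a) (pscale t b).

Definition strictly_convex_body (K : pset) : Prop :=
  convex_body K /\
  forall a b, a <> b -> ~ (forall z, segment a b z -> boundary K z).

(* x is a point of K on its supporting line with outer unit normal u;
   for K strictly convex such a point exists and is unique: x_K(u). *)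
Definition support_point (K : pset) (u x : pt) : Prop :=
  K x /\ forall y, K y -> dot y u <= dot x u.

Definition middle_hedgehog (K : pset) : pset :=
  fun m => exists u x y, unit_vec u /\ support_point K u x /\
    support_point K (popp u) y /\ m = pscale (1/2) (padd x y).

Definition conv (M : pset) : pset :=
  fun x => forall C, is_convex C -> (forall y, M y -> C y) -> C x.

Definition exposed_point (C : pset) (x : pt) : Prop :=
  C x /\ exists u, u <> (0,0) /\ forall y, C y -> y <> x -> dot y u < dot x u.

Definition at_most_k_exposed (k : nat) (C : pset) : Prop :=
  exists l : list pt, (length l <= k)%nat /\
    forall x, exposed_point C x -> In x l.

Definition A_k (k : nat) (K : pset) : Prop :=
  strictly_convex_body K /\ at_most_k_exposed k (conv (middle_hedgehog K)).

Definition hausdorff_le (K L : pset) (delta : R) : Prop :=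
  (forall x, K x -> exists y, L y /\ dist2 x y <= delta) /\
  (forall y, L y -> exists x, K x /\ dist2 x y <= delta).

(* d_H(K,L) < eps, where d_H(K,L) = inf { delta >= 0 : hausdorff_le K L delta } *)
Definition hausdorff_lt (K L : pset) (eps : R) : Prop :=
  exists delta, 0 <= delta < eps /\ hausdorff_le K L delta.

(* A is closed in the metric space (K^2_*, d_H): its complement in K^2_* is open *)
Definition closed_in_Kstar (A : pset -> Prop) : Prop :=
  forall K, strictly_convex_body K -> ~ A K ->
    exists eps, 0 < eps /\
      forall L, strictly_convex_body L -> hausdorff_lt K L eps -> ~ A L.

(* Main.v *)
Require Import Defs.
From Stdlib Require Import Reals List Lia Lra Psatz Classical ClassicalEpsilon.
Open Scope R_scope.

Definition nsq (x:pt) := dot x x.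
Definition psub (x y : pt) : pt := padd x (popp y).

Lemma sq_ge0 (x y : pt) : 0 <= (fst x - fst y)^2 + (snd x - snd y)^2.
Proof. apply Rplus_le_le_0_compat; apply pow2_ge_0. Qed.

Lemma d2_ge0 x y : 0 <= dist2 x y.
Proof. apply sqrt_pos. Qed.

Lemma d2_sq x y : dist2 x y * dist2 x y = (fst x - fst y)^2 + (snd x - snd y)^2.
Proof. unfold dist2. apply sqrt_sqrt, sq_ge0. Qed.

Lemma d2_lt_sq x y e : 0 < e -> (fst x - fst y)^2 + (snd x - snd y)^2 < e*e -> dist2 x y < e.
Proof. intros He H. unfold dist2. rewrite <- (sqrt_square e) by lra.
  apply sqrt_lt_1; [apply sq_ge0|nra|exact H]. Qed.

Lemma d2_le_sq x y e : 0 <= e -> (fst x - fst y)^2 + (snd x - snd y)^2 <= e*e -> dist2 x y <= e.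
Proof. intros He H. unfold dist2. rewrite <- (sqrt_square e) by lra.
  apply sqrt_le_1_alt; auto. Qed.

Lemma d2_sq_lt x y e : dist2 x y < e -> (fst x - fst y)^2 + (snd x - snd y)^2 < e*e.
Proof. intros H. rewrite <- d2_sq. pose proof (d2_ge0 x y). nra. Qed.

Lemma d2_sq_le x y e : dist2 x y <= e -> (fst x - fst y)^2 + (snd x - snd y)^2 <= e*e.
Proof. intros H. rewrite <- d2_sq. pose proof (d2_ge0 x y). nra. Qed.

Lemma d2_sym x y : dist2 x y = dist2 y x.
Proof. unfold dist2. f_equal. ring. Qed.

Lemma d2_refl x : dist2 x x = 0.
Proof. unfold dist2. replace ((fst x - fst x) ^ 2 + (snd x - snd x) ^ 2) with 0 by ring. apply sqrt_0. Qed.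

Lemma abs_le_of_sq v P : 0 <= P -> v*v <= P*P -> Rabs v <= P.
Proof. intros. unfold Rabs; destruct (Rcase_abs v); nra. Qed.

Lemma d2_tri x y z : dist2 x z <= dist2 x y + dist2 y z.
Proof.
  pose proof (d2_ge0 x y) as Ha. pose proof (d2_ge0 y z) as Hb.
  pose proof (d2_sq x y) as Ea. pose proof (d2_sq y z) as Eb.
  apply d2_le_sq; [lra|].
  set (a := dist2 x y) in *. set (b := dist2 y z) in *.
  set (d1 := fst x - fst y) in *. set (d2 := snd x - snd y) in *.
  set (e1 := fst y - fst z) in *. set (e2 := snd y - snd z) in *.
  assert (L : (d1*e1 + d2*e2)^2 <= (a*b)^2).
  { replace ((a*b)^2) with ((a*a)*(b*b)) by ring. rewrite Ea, Eb.
    assert (0 <= (d1*e2 - d2*e1)^2) by apply pow2_ge_0.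
    replace ((d1 ^ 2 + d2 ^ 2) * (e1 ^ 2 + e2 ^ 2)) with ((d1*e1 + d2*e2)^2 + (d1*e2 - d2*e1)^2) by ring.
    lra. }
  assert (0 <= a*b) by (apply Rmult_le_pos; auto).
  assert (L2 : d1*e1 + d2*e2 <= a*b).
  { destruct (Rle_lt_dec (d1*e1+d2*e2) (a*b)) as [?|Hc]; [auto|]. exfalso. simpl in L. nra. }
  replace ((fst x - fst z) ^ 2 + (snd x - snd z) ^ 2) with
    ((d1^2 + d2^2) + (e1^2+e2^2) + 2*(d1*e1+d2*e2)) by (unfold d1,d2,e1,e2; ring).
  rewrite <- Ea, <- Eb. nra.
Qed.

Lemma d2_fst x y : Rabs (fst x - fst y) <= dist2 x y.
Proof. apply abs_le_of_sq. apply d2_ge0. rewrite d2_sq. pose proof (pow2_ge_0 (snd x - snd y)). lra. Qed.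
Lemma d2_snd x y : Rabs (snd x - snd y) <= dist2 x y.
Proof. apply abs_le_of_sq. apply d2_ge0. rewrite d2_sq. pose proof (pow2_ge_0 (fst x - fst y)). lra. Qed.

Lemma dot_cs a b : Rabs (dot a b) <= dist2 a (0,0) * dist2 b (0,0).
Proof.
  apply abs_le_of_sq. apply Rmult_le_pos; apply d2_ge0.
  replace (dist2 a (0, 0) * dist2 b (0, 0) * (dist2 a (0, 0) * dist2 b (0, 0)))
    with ((dist2 a (0, 0) * dist2 a (0, 0)) * (dist2 b (0, 0) * dist2 b (0, 0))) by ring.
  rewrite !d2_sq. unfold dot; simpl.
  destruct a as [a1 a2]; destruct b as [b1 b2]; simpl.
  pose proof (pow2_ge_0 (a1*b2 - a2*b1)).
  replace ((a1 - 0) ^ 2 + (a2 - 0) ^ 2) with (a1^2+a2^2) by ring.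
  replace ((b1 - 0) ^ 2 + (b2 - 0) ^ 2) with (b1^2+b2^2) by ring.
  replace ((a1 ^ 2 + a2 ^ 2) * (b1 ^ 2 + b2 ^ 2)) with ((a1*b1+a2*b2)^2 + (a1*b2 - a2*b1)^2) by ring.
  lra.
Qed.

Lemma dot_unit a b u : unit_vec u -> Rabs (dot (psub a b) u) <= dist2 a b.
Proof.
  intros Hu. unfold unit_vec, dot in Hu. apply abs_le_of_sq. apply d2_ge0.
  rewrite d2_sq. unfold dot, psub, padd, popp; simpl.
  set (d1 := fst a - fst b). set (d2 := snd a - snd b).
  replace (fst a + - fst b) with d1 by (unfold d1; ring).
  replace (snd a + - snd b) with d2 by (unfold d2; ring).
  assert ((d1 * fst u + d2 * snd u) * (d1 * fst u + d2 * snd u) <=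
     (d1^2 + d2^2) * (fst u * fst u + snd u * snd u)).
  { pose proof (pow2_ge_0 (d1 * snd u - d2 * fst u)).
    replace ((d1^2 + d2^2) * (fst u * fst u + snd u * snd u)) with
      ((d1 * fst u + d2 * snd u) * (d1 * fst u + d2 * snd u) + (d1 * snd u - d2 * fst u)^2) by ring.
    lra. }
  rewrite Hu in H. lra.
Qed.

Lemma dot_psub a b u : dot (psub a b) u = dot a u - dot b u.
Proof. unfold dot, psub, padd, popp; simpl; ring. Qed.

Definition conv_pt (a : nat -> pt) (l : pt) : Prop :=
  Un_cv (fun n => fst (a n)) (fst l) /\ Un_cv (fun n => snd (a n)) (snd l).
Definition incr (f : nat -> nat) : Prop := forall n, (f n < f (S n))%nat.

Lemma incr_mono f : incr f -> forall m n, (m <= n)%nat -> (f m <= f n)%nat.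
Proof. intros Hf m n H. induction H; auto. specialize (Hf m0). lia. Qed.

Lemma incr_ge f : incr f -> forall n, (n <= f n)%nat.
Proof. intros Hf n. induction n. lia. specialize (Hf n). lia. Qed.

Lemma incr_comp f g : incr f -> incr g -> incr (fun n => f (g n)).
Proof. intros Hf Hg n. pose proof (incr_mono f Hf (S (g n)) (g (S n)) (Hg n)).
  specialize (Hf (g n)); lia. Qed.

Lemma cv_sub a l f : Un_cv a l -> incr f -> Un_cv (fun n => a (f n)) l.
Proof. intros H Hf e He. destruct (H e He) as [N HN]. exists N. intros n Hn.
  apply HN. pose proof (incr_ge f Hf n). lia. Qed.

Lemma conv_sub a l f : conv_pt a l -> incr f -> conv_pt (fun n => a (f n)) l.
Proof. intros [H1 H2] Hf. split; apply (cv_sub (fun n => _ (a n))); auto. Qed.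

Lemma Un_cv_ext a b l : (forall n, a n = b n) -> Un_cv a l -> Un_cv b l.
Proof. intros E H e He. destruct (H e He) as [N HN]. exists N. intros n Hn. rewrite <- E. auto. Qed.

Lemma cv_const c : Un_cv (fun _ => c) c.
Proof. intros e He. exists 0%nat. intros. unfold R_dist. replace (c - c) with 0 by ring.
  rewrite Rabs_R0. auto. Qed.

Lemma small_inv e : 0 < e -> exists N, / (INR N + 1) < e.
Proof. intros He. destruct (INR_archimed e 1) as [N HN]; [lra|]. exists N.
  pose proof (pos_INR N).
  apply (Rmult_lt_reg_r (INR N + 1)); [lra|]. rewrite Rinv_l by lra. lra. Qed.

Lemma inv_le n m : (n <= m)%nat -> / (INR m + 1) <= / (INR n + 1).
Proof. intros H. apply Rinv_le_contravar. pose proof (pos_INR n); lra.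
  apply le_INR in H. lra. Qed.

Lemma inv_pos n : 0 < / (INR n + 1).
Proof. apply Rinv_0_lt_compat. pose proof (pos_INR n); lra. Qed.

Lemma cv_inv f : incr f -> Un_cv (fun n => / (INR (f n) + 1)) 0.
Proof. intros Hf e He. destruct (small_inv e He) as [N HN]. exists N. intros n Hn.
  unfold R_dist. rewrite Rminus_0_r. rewrite Rabs_pos_eq by (left; apply inv_pos).
  eapply Rle_lt_trans; [|apply HN]. apply inv_le. pose proof (incr_ge f Hf n). lia. Qed.

Lemma bw1 (a : nat -> R) M : (forall n, Rabs (a n) <= M) ->
  exists f, incr f /\ exists l, Un_cv (fun n => a (f n)) l.
Proof.
  intros HM.
  destruct (Bolzano_Weierstrass a (fun c => -M <= c <= M) (compact_P3 (-M) M)) as [l Hl].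
  { intros n. specialize (HM n). unfold Rabs in HM. destruct (Rcase_abs (a n)); lra. }
  assert (H : forall n N, exists p, (N <= p)%nat /\ Rabs (a p - l) < / (INR n + 1)).
  { intros n N. destruct (Hl (fun y => Rabs (y - l) < / (INR n + 1)) N) as [p Hp].
    - exists (mkposreal _ (inv_pos n)). intros y Hy. exact Hy.
    - exists p; auto. }
  pose (g := fun n N => proj1_sig (constructive_indefinite_description _ (H n N))).
  assert (Hg : forall n N, (N <= g n N)%nat /\ Rabs (a (g n N) - l) < / (INR n + 1)).
  { intros n N. unfold g. destruct (constructive_indefinite_description _ (H n N)). simpl. auto. }
  pose (phi := fix phi n := match n with 0%nat => g 0%nat 0%nat | S k => g (S k) (S (phi k)) end).
  assert (Hb : forall n, Rabs (a (phi n) - l) < / (INR n + 1)).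
  { intros [|n]; simpl; apply Hg. }
  exists phi. split.
  - intros n. simpl. destruct (Hg (S n) (S (phi n))). lia.
  - exists l. intros e He. destruct (small_inv e He) as [N HN]. exists N. intros n Hn.
    unfold R_dist. eapply Rlt_le_trans. apply Hb. eapply Rle_trans; [apply inv_le; exact Hn|]. lra.
Qed.

Lemma bw2 (a : nat -> pt) M : (forall n, Rabs (fst (a n)) <= M /\ Rabs (snd (a n)) <= M) ->
  exists f, incr f /\ exists l, conv_pt (fun n => a (f n)) l.
Proof.
  intros HM.
  destruct (bw1 (fun n => fst (a n)) M) as [f [Hf [l1 Hl1]]]. { intros; apply HM. }
  destruct (bw1 (fun n => snd (a (f n))) M) as [g [Hg [l2 Hl2]]]. { intros; apply HM. }
  exists (fun n => f (g n)). split. apply incr_comp; auto.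
  exists (l1, l2). split; simpl; auto.
  apply (cv_sub (fun n => fst (a (f n))) l1 g); auto.
Qed.

Lemma conv_dot a b l m : conv_pt a l -> conv_pt b m ->
  Un_cv (fun n => dot (a n) (b n)) (dot l m).
Proof. intros [A1 A2] [B1 B2]. unfold dot. apply CV_plus; apply CV_mult; auto. Qed.

Lemma conv_const c : conv_pt (fun _ => c) c.
Proof. split; apply cv_const. Qed.

Lemma conv_padd a b l m : conv_pt a l -> conv_pt b m -> conv_pt (fun n => padd (a n) (b n)) (padd l m).
Proof. intros [A1 A2] [B1 B2]. split; simpl; apply CV_plus; auto. Qed.

Lemma conv_popp a l : conv_pt a l -> conv_pt (fun n => popp (a n)) (popp l).
Proof. intros [A1 A2]. split; simpl.
  - apply (Un_cv_ext (opp_seq (fun n => fst (a n)))). intros; reflexivity. apply CV_opp; auto.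
  - apply (Un_cv_ext (opp_seq (fun n => snd (a n)))). intros; reflexivity. apply CV_opp; auto. Qed.

Lemma conv_pscale c a l : conv_pt a l -> conv_pt (fun n => pscale c (a n)) (pscale c l).
Proof. intros [A1 A2]. split; simpl; apply CV_mult; auto; apply cv_const. Qed.

Lemma conv_psub a b l m : conv_pt a l -> conv_pt b m -> conv_pt (fun n => psub (a n) (b n)) (psub l m).
Proof. intros. apply conv_padd; auto. apply conv_popp; auto. Qed.

Lemma abs_sq_half v e : 0 < e -> Rabs v < e/2 -> v^2 < e*e/4.
Proof. intros He Hv. unfold Rabs in Hv. destruct (Rcase_abs v); nra. Qed.

Lemma cv_dist a l : conv_pt a l -> forall e, 0 < e -> exists N, forall n, (n >= N)%nat -> dist2 (a n) l < e.
Proof.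
  intros [A1 A2] e He.
  destruct (A1 (e/2)) as [N1 H1]; [lra|]. destruct (A2 (e/2)) as [N2 H2]; [lra|].
  exists (max N1 N2). intros n Hn. apply d2_lt_sq; auto.
  specialize (H1 n ltac:(lia)). specialize (H2 n ltac:(lia)). unfold R_dist in *.
  apply (abs_sq_half _ e He) in H1. apply (abs_sq_half _ e He) in H2. assert (0 < e*e) by nra. lra.
Qed.

Lemma dist_cv a l : (forall e, 0 < e -> exists N, forall n, (n >= N)%nat -> dist2 (a n) l < e) -> conv_pt a l.
Proof.
  intros H. split; intros e He; destruct (H e He) as [N HN]; exists N; intros n Hn;
  unfold R_dist; eapply Rle_lt_trans; try apply (HN n Hn).
  apply d2_fst. apply d2_snd.
Qed.

Lemma closed_lim K a l : is_closed K -> (forall n, K (a n)) -> conv_pt a l -> K l.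
Proof.
  intros HK Ha Hl. apply HK. intros e He. destruct (cv_dist a l Hl e He) as [N HN].
  exists (a N). split; auto. rewrite d2_sym. apply HN. lia.
Qed.

Lemma cv_s_inv s f : incr f -> Un_cv (fun n => s - / (INR (f n) + 1)) s.
Proof. intros Hf. pose proof (CV_minus _ _ _ _ (cv_const s) (cv_inv f Hf)) as H.
  rewrite Rminus_0_r in H. exact H. Qed.

Lemma unit_norm u : unit_vec u -> dist2 u (0,0) = 1.
Proof. intros H. unfold dist2, unit_vec, dot in *. cbn [fst snd].
  replace ((fst u - 0) ^ 2 + (snd u - 0) ^ 2) with (fst u * fst u + snd u * snd u) by ring.
  rewrite H. apply sqrt_1. Qed.

Lemma coord_bound x R : dist2 x (0,0) <= R -> Rabs (fst x) <= R /\ Rabs (snd x) <= R.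
Proof. intros H. split.
  - replace (fst x) with (fst x - fst (0,0)) by (simpl; ring). eapply Rle_trans; [apply d2_fst|]; auto.
  - replace (snd x) with (snd x - snd (0,0)) by (simpl; ring). eapply Rle_trans; [apply d2_snd|]; auto.
Qed.

Lemma unit_popp u : unit_vec u -> unit_vec (popp u).
Proof. unfold unit_vec, dot, popp; simpl. intros H. lra. Qed.

Lemma dot_padd a b u : dot (padd a b) u = dot a u + dot b u.
Proof. unfold dot, padd; simpl; ring. Qed.
Lemma dot_pscale c a u : dot (pscale c a) u = c * dot a u.
Proof. unfold dot, pscale; simpl; ring. Qed.
Lemma dot_popp_r a u : dot a (popp u) = - dot a u.
Proof. unfold dot, popp; simpl; ring. Qed.
Lemma dot_comm a b : dot a b = dot b a.
Proof. unfold dot; ring. Qed.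

Lemma scb_bound K : strictly_convex_body K ->
  exists R, 0 <= R /\ forall x, K x -> dist2 x (0,0) <= R.
Proof.
  intros [[[x0 Hx0] [[_ [r Hr]] _]] _]. exists r. split; auto.
  eapply Rle_trans; [apply d2_ge0|apply (Hr x0 Hx0)].
Qed.

Lemma scb_closed K : strictly_convex_body K -> is_closed K.
Proof. intros [[_ [[H _] _]] _]. auto. Qed.
Lemma scb_convex K : strictly_convex_body K -> is_convex K.
Proof. intros [[_ [_ H]] _]. auto. Qed.
Lemma scb_ne K : strictly_convex_body K -> exists x, K x.
Proof. intros [[H _] _]. auto. Qed.

Lemma support_exists K u : strictly_convex_body K -> exists x, support_point K u x.
Proof.
  intros HK. destruct (scb_bound K HK) as [R [HR0 HR]].
  set (E := fun v => exists y, K y /\ v = dot y u).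
  assert (HE : bound E).
  { exists (R * dist2 u (0,0)). intros v [y [Hy ->]].
    pose proof (dot_cs y u). pose proof (HR y Hy). pose proof (d2_ge0 u (0,0)).
    unfold Rabs in H. destruct (Rcase_abs (dot y u)); nra. }
  destruct (scb_ne K HK) as [x0 Hx0].
  destruct (completeness E HE) as [s [Hs1 Hs2]]. { exists (dot x0 u). exists x0; auto. }
  assert (Hn : forall n, exists y, K y /\ s - / (INR n + 1) < dot y u).
  { intros n. apply NNPP. intros Hc.
    assert (is_upper_bound E (s - / (INR n + 1))).
    { intros v [y [Hy ->]]. apply Rnot_lt_le. intros Hl. apply Hc. exists y; auto. }
    apply Hs2 in H. pose proof (inv_pos n). lra. }
  pose (Y := fun n => proj1_sig (constructive_indefinite_description _ (Hn n))).
  assert (HY : forall n, K (Y n) /\ s - / (INR n + 1) < dot (Y n) u).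
  { intros n. unfold Y. destruct (constructive_indefinite_description _ (Hn n)); simpl; auto. }
  destruct (bw2 Y R) as [f [Hf [l Hl]]].
  { intros n. apply coord_bound. apply HR. apply HY. }
  assert (Kl : K l). { apply (closed_lim K (fun n => Y (f n))); auto. apply scb_closed; auto. intros; apply HY. }
  assert (Hsl : s <= dot l u).
  { apply (@Rle_cv_lim (fun n => s - / (INR (f n) + 1)) (fun n => dot (Y (f n)) u) s).
    - intros n. left. apply HY.
    - apply cv_s_inv; auto.
    - apply (conv_dot _ (fun _ => u)); auto. apply conv_const. }
  exists l. split; auto. intros y Hy. assert (E (dot y u)) by (exists y; auto).
  apply Hs1 in H. lra.
Qed.

Lemma support_unique K u x y : strictly_convex_body K -> unit_vec u ->
  support_point K u x -> support_point K u y -> x = y.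
Proof.
  intros HK Hu [Kx Hx] [Ky Hy]. apply NNPP. intros Hne.
  destruct HK as [HKb HKs]. apply (HKs x y Hne).
  assert (Exy : dot x u = dot y u). { pose proof (Hx y Ky). pose proof (Hy x Kx). lra. }
  intros z [t [Ht ->]]. split.
  - destruct HKb as [_ [_ Hc]]. apply Hc; auto.
  - intros eps Heps. exists (padd (padd (pscale (1 - t) x) (pscale t y)) (pscale (eps/2) u)).
    split.
    + apply d2_lt_sq; auto. unfold unit_vec, dot in Hu. unfold padd, pscale; cbn [fst snd].
      match goal with |- ?A < _ => replace A with ((eps/2)^2 * (fst u * fst u + snd u * snd u)) by ring end.
      rewrite Hu. nra.
    + intros Hw. apply Hx in Hw. rewrite !dot_padd, !dot_pscale in Hw.
      unfold unit_vec in Hu. rewrite Hu in Hw. rewrite <- Exy in Hw. nra.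
Qed.

Definition xs (K : pset) (u : pt) : pt := epsilon (inhabits (0,0)) (fun x => support_point K u x).
Definition mK (K : pset) (u : pt) : pt := pscale (1/2) (padd (xs K u) (xs K (popp u))).

Lemma xs_spec K u : strictly_convex_body K -> support_point K u (xs K u).
Proof. intros HK. unfold xs. apply epsilon_spec. apply support_exists; auto. Qed.

Lemma xs_eq K u x : strictly_convex_body K -> unit_vec u -> support_point K u x -> xs K u = x.
Proof. intros. eapply support_unique; eauto. apply xs_spec; auto. Qed.

Lemma mh_char K m : strictly_convex_body K ->
  (middle_hedgehog K m <-> exists u, unit_vec u /\ m = mK K u).
Proof.
  intros HK. split.
  - intros [u [x [y [Hu [Hx [Hy ->]]]]]]. exists u. split; auto. unfold mK.
    rewrite (xs_eq K u x), (xs_eq K (popp u) y); auto. apply unit_popp; auto.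
  - intros [u [Hu ->]]. exists u, (xs K u), (xs K (popp u)). repeat split; auto; apply xs_spec; auto.
Qed.

Lemma K_norm K R x : (forall x, K x -> dist2 x (0,0) <= R) -> K x -> dist2 x (0,0) <= R.
Proof. auto. Qed.

Lemma mh_bound K R m : strictly_convex_body K -> (forall x, K x -> dist2 x (0,0) <= R) -> 0 <= R ->
  middle_hedgehog K m -> dist2 m (0,0) <= R.
Proof.
  intros HK HR HR0 [u [x [y [_ [[Kx _] [[Ky _] ->]]]]]].
  apply d2_le_sq; auto. apply HR in Kx. apply HR in Ky. apply d2_sq_le in Kx. apply d2_sq_le in Ky.
  simpl in *. destruct x as [x1 x2]; destruct y as [y1 y2]; simpl in *.
  pose proof (pow2_ge_0 (x1 - y1)). pose proof (pow2_ge_0 (x2 - y2)).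
  replace ((1 / 2 * (x1 + y1) - 0) ^ 2 + (1 / 2 * (x2 + y2) - 0) ^ 2) with
    (((x1-0)^2 + (x2-0)^2 + ((y1-0)^2 + (y2-0)^2))/2 - ((x1-y1)^2 + (x2-y2)^2)/4) by (field).
  lra.
Qed.

Lemma d2_nsq x y : dist2 x y * dist2 x y = dot (psub x y) (psub x y).
Proof. rewrite d2_sq. unfold dot, psub, padd, popp; cbn [fst snd]. ring. Qed.

Lemma d2_psub a b : dist2 (psub a b) (0,0) = dist2 a b.
Proof. unfold dist2, psub, padd, popp; cbn [fst snd]. f_equal. ring. Qed.

Lemma d2_transl a b c : dist2 (padd a c) (padd b c) = dist2 a b.
Proof. unfold dist2, padd; cbn [fst snd]. f_equal. ring. Qed.
Lemma d2_transl_l a b c : dist2 (padd c a) (padd c b) = dist2 a b.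
Proof. unfold dist2, padd; cbn [fst snd]. f_equal. ring. Qed.

Lemma d2_half x y : dist2 (pscale (1/2) x) (pscale (1/2) y) = dist2 x y / 2.
Proof. unfold dist2, pscale; cbn [fst snd].
  replace ((1 / 2 * fst x - 1 / 2 * fst y) ^ 2 + (1 / 2 * snd x - 1 / 2 * snd y) ^ 2)
    with ((1/2 * (1/2)) * ((fst x - fst y) ^ 2 + (snd x - snd y) ^ 2)) by ring.
  rewrite sqrt_mult_alt by lra. rewrite sqrt_square by lra. lra. Qed.

Lemma d2_mid a b c d : dist2 (pscale (1/2) (padd a b)) (pscale (1/2) (padd c d)) <= (dist2 a c + dist2 b d) / 2.
Proof. rewrite d2_half. pose proof (d2_tri (padd a b) (padd c b) (padd c d)).
  rewrite d2_transl, d2_transl_l in H. lra. Qed.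

Lemma modulus K rho : strictly_convex_body K -> 0 < rho -> exists eta, 0 < eta /\
  forall u y, unit_vec u -> K y -> dot (xs K u) u - eta <= dot y u -> dist2 y (xs K u) < rho.
Proof.
  intros HK Hrho. apply NNPP. intros Hc.
  assert (Hn : forall n, exists p : pt * pt, unit_vec (fst p) /\ K (snd p) /\
     dot (xs K (fst p)) (fst p) - / (INR n + 1) <= dot (snd p) (fst p) /\
     rho <= dist2 (snd p) (xs K (fst p))).
  { intros n. apply NNPP. intros H. apply Hc. exists (/ (INR n + 1)). split. apply inv_pos.
    intros u y Hu Ky Hd. apply Rnot_le_lt. intros Hd2. apply H. exists (u, y). simpl. auto. }
  pose (P := fun n => proj1_sig (constructive_indefinite_description _ (Hn n))).
  assert (HP : forall n, unit_vec (fst (P n)) /\ K (snd (P n)) /\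
     dot (xs K (fst (P n))) (fst (P n)) - / (INR n + 1) <= dot (snd (P n)) (fst (P n)) /\
     rho <= dist2 (snd (P n)) (xs K (fst (P n)))).
  { intros n. unfold P. destruct (constructive_indefinite_description _ (Hn n)); simpl; auto. }
  set (U := fun n => fst (P n)). set (Y := fun n => snd (P n)). set (Z := fun n => xs K (U n)).
  destruct (scb_bound K HK) as [R [HR0 HR]].
  assert (KZ : forall n, K (Z n)). { intros n. apply xs_spec; auto. }
  destruct (bw2 U 1) as [f1 [Hf1 [u Hu]]].
  { intros n. apply coord_bound. rewrite unit_norm. lra. apply HP. }
  destruct (bw2 (fun n => Y (f1 n)) R) as [f2 [Hf2 [y Hy]]].
  { intros n. apply coord_bound. apply HR. apply HP. }
  destruct (bw2 (fun n => Z (f1 (f2 n))) R) as [f3 [Hf3 [z Hz]]].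
  { intros n. apply coord_bound. apply HR. apply KZ. }
  set (phi := fun n => f1 (f2 (f3 n))).
  assert (Hphi : incr phi). { apply (incr_comp f1 (fun n => f2 (f3 n))); auto. apply incr_comp; auto. }
  assert (Cu : conv_pt (fun n => U (phi n)) u).
  { apply (conv_sub (fun n => U (f1 n)) u (fun n => f2 (f3 n))); auto. apply incr_comp; auto. }
  assert (Cy : conv_pt (fun n => Y (phi n)) y).
  { apply (conv_sub (fun n => Y (f1 (f2 n))) y f3); auto. }
  assert (Cz : conv_pt (fun n => Z (phi n)) z) by exact Hz.
  assert (Uu : unit_vec u).
  { unfold unit_vec. apply (UL_sequence (fun n => dot (U (phi n)) (U (phi n)))).
    apply conv_dot; auto. apply (Un_cv_ext (fun _ => 1)). intros n. symmetry. apply HP. apply cv_const. }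
  assert (Ky : K y). { apply (closed_lim K (fun n => Y (phi n))); auto. apply scb_closed; auto. intros; apply HP. }
  assert (Kz : K z). { apply (closed_lim K (fun n => Z (phi n))); auto. apply scb_closed; auto. }
  assert (Sz : forall w, K w -> dot w u <= dot z u).
  { intros w Kw. apply (@Rle_cv_lim (fun n => dot w (U (phi n))) (fun n => dot (Z (phi n)) (U (phi n)))).
    - intros n. apply xs_spec; auto.
    - apply (conv_dot (fun _ => w)); auto. apply conv_const.
    - apply conv_dot; auto. }
  assert (Syz : dot z u <= dot y u).
  { apply (@Rle_cv_lim (fun n => dot (Z (phi n)) (U (phi n)) - / (INR (phi n) + 1)) (fun n => dot (Y (phi n)) (U (phi n)))).
    - intros n. apply HP.
    - pose proof (CV_minus _ _ _ _ (conv_dot _ _ _ _ Cz Cu) (cv_inv phi Hphi)) as H.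
      rewrite Rminus_0_r in H. exact H.
    - apply conv_dot; auto. }
  assert (Dyz : rho * rho <= dot (psub y z) (psub y z)).
  { apply (@Rle_cv_lim (fun _ => rho * rho) (fun n => dot (psub (Y (phi n)) (Z (phi n))) (psub (Y (phi n)) (Z (phi n))))).
    - intros n. rewrite <- d2_nsq. destruct (HP (phi n)) as [_ [_ [_ H]]].
      apply Rmult_le_compat; [lra|lra|exact H|exact H].
    - apply cv_const.
    - apply conv_dot; apply conv_psub; auto. }
  assert (Eyz : y = z).
  { apply (support_unique K u y z HK Uu).
    - split; auto. intros w Kw. pose proof (Sz w Kw). lra.
    - split; auto. }
  subst z. rewrite <- d2_nsq, d2_refl in Dyz. nra.
Qed.

Lemma xs_cont K U u : strictly_convex_body K -> (forall n, unit_vec (U n)) -> unit_vec u ->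
  conv_pt U u -> conv_pt (fun n => xs K (U n)) (xs K u).
Proof.
  intros HK HU Hu HC. apply dist_cv. intros e He.
  destruct (modulus K e HK He) as [eta [Heta Hm]].
  destruct (scb_bound K HK) as [R [HR0 HR]].
  destruct (cv_dist U u HC (eta / (2*R+1))) as [N HN].
  { apply Rdiv_lt_0_compat; lra. }
  exists N. intros n Hn. apply Hm; auto. apply xs_spec; auto.
  set (a := xs K (U n)). set (b := xs K u). set (d := dist2 (U n) u).
  assert (Hd : d < eta / (2*R+1)) by (apply HN; auto).
  assert (Ka : K a) by (apply xs_spec; auto). assert (Kb : K b) by (apply xs_spec; auto).
  assert (S1 : dot b (U n) <= dot a (U n)). { apply (xs_spec K (U n) HK). auto. }
  pose proof (dot_cs a (psub u (U n))) as C1. pose proof (dot_cs b (psub u (U n))) as C2.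
  rewrite d2_psub, (d2_sym u (U n)) in C1, C2. fold d in C1, C2.
  rewrite dot_comm, dot_psub, (dot_comm (U n) a), (dot_comm u a) in C1.
  rewrite dot_comm, dot_psub, (dot_comm (U n) b), (dot_comm u b) in C2.
  pose proof (HR a Ka). pose proof (HR b Kb). pose proof (d2_ge0 (U n) u). fold d in H1.
  assert (R * d <= R * (eta / (2*R+1))) by (apply Rmult_le_compat_l; lra).
  assert (R * (eta / (2*R+1)) * 2 < eta).
  { assert (R * (eta / (2*R+1)) * 2 = eta - eta/(2*R+1)) by (field; lra).
    assert (0 < eta / (2*R+1)) by (apply Rdiv_lt_0_compat; lra). lra. }
  assert (dist2 a (0,0) * d <= R * d) by (apply Rmult_le_compat_r; lra).
  assert (dist2 b (0,0) * d <= R * d) by (apply Rmult_le_compat_r; lra).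
  unfold Rabs in C1, C2.
  destruct (Rcase_abs (dot a u - dot a (U n))); destruct (Rcase_abs (dot b u - dot b (U n))); lra.
Qed.

Lemma conv_unit_popp (U : nat -> pt) : (forall n, unit_vec (U n)) -> forall n, unit_vec (popp (U n)).
Proof. intros; apply unit_popp; auto. Qed.

Lemma mK_cont K U u : strictly_convex_body K -> (forall n, unit_vec (U n)) -> unit_vec u ->
  conv_pt U u -> conv_pt (fun n => mK K (U n)) (mK K u).
Proof.
  intros HK HU Hu HC. unfold mK. apply conv_pscale. apply conv_padd.
  - apply xs_cont; auto.
  - apply (xs_cont K (fun n => popp (U n))); auto. apply conv_unit_popp; auto.
    apply unit_popp; auto. apply conv_popp; auto.
Qed.

Lemma xs_close K eps : strictly_convex_body K -> 0 < eps -> exists del, 0 < del /\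
  forall L, strictly_convex_body L -> hausdorff_lt K L del ->
  forall u, unit_vec u -> dist2 (xs L u) (xs K u) < eps.
Proof.
  intros HK He. destruct (modulus K (eps/2) HK) as [eta [Heta Hm]]; [lra|].
  exists (Rmin (eps/2) (eta/3)). split. apply Rmin_pos; lra.
  intros L HL [d [[Hd0 Hd] [H1 H2]]] u Hu.
  assert (d < eps/2 /\ d < eta/3).
  { split; eapply Rlt_le_trans; eauto. apply Rmin_l. apply Rmin_r. }
  set (a := xs L u). set (b := xs K u).
  assert (Kb : K b) by (apply xs_spec; auto). assert (La : L a) by (apply xs_spec; auto).
  destruct (H1 b Kb) as [y' [Ly' Dy']]. destruct (H2 a La) as [y [Ky Dy]].
  pose proof (dot_unit b y' u Hu) as U1. pose proof (dot_unit y a u Hu) as U2.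
  rewrite dot_psub in U1, U2.
  assert (S : dot y' u <= dot a u) by (apply (xs_spec L u HL); auto).
  assert (dist2 y b < eps / 2).
  { apply Hm; auto. fold b. unfold Rabs in U1, U2.
    destruct (Rcase_abs (dot b u - dot y' u)); destruct (Rcase_abs (dot y u - dot a u)); lra. }
  pose proof (d2_tri a y b). rewrite (d2_sym a y) in H3. lra.
Qed.

Lemma mK_close K eps : strictly_convex_body K -> 0 < eps -> exists del, 0 < del /\
  forall L, strictly_convex_body L -> hausdorff_lt K L del ->
  forall u, unit_vec u -> dist2 (mK L u) (mK K u) < eps.
Proof.
  intros HK He. destruct (xs_close K eps HK He) as [del [Hdel H]]. exists del. split; auto.
  intros L HL Hh u Hu. unfold mK. eapply Rle_lt_trans. apply d2_mid.
  pose proof (H L HL Hh u Hu). pose proof (H L HL Hh (popp u) (unit_popp u Hu)). lra.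
Qed.

Definition seqcont (g : pt -> R) := forall a l, conv_pt a l -> Un_cv (fun n => g (a n)) (g l).

Lemma conv_ext a b l : (forall n, a n = b n) -> conv_pt a l -> conv_pt b l.
Proof. intros E [H1 H2]. split; eapply Un_cv_ext; eauto; intros n; simpl; rewrite E; auto. Qed.

Lemma unit_lim U u : (forall n, unit_vec (U n)) -> conv_pt U u -> unit_vec u.
Proof. intros HU Hu. unfold unit_vec. apply (UL_sequence (fun n => dot (U n) (U n))).
  apply conv_dot; auto. apply (Un_cv_ext (fun _ => 1)). intros n. symmetry. apply HU. apply cv_const. Qed.

Lemma mh_seq K m : strictly_convex_body K -> (forall n, middle_hedgehog K (m n)) ->
  exists f, incr f /\ exists ms, middle_hedgehog K ms /\ conv_pt (fun n => m (f n)) ms.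
Proof.
  intros HK Hm.
  assert (Hn : forall n, exists u, unit_vec u /\ m n = mK K u). { intros n. apply mh_char; auto. }
  pose (U := fun n => proj1_sig (constructive_indefinite_description _ (Hn n))).
  assert (HU : forall n, unit_vec (U n) /\ m n = mK K (U n)).
  { intros n. unfold U. destruct (constructive_indefinite_description _ (Hn n)); simpl; auto. }
  destruct (bw2 U 1) as [f [Hf [u Hu]]].
  { intros n. apply coord_bound. rewrite unit_norm. lra. apply HU. }
  assert (Uu : unit_vec u). { apply (unit_lim (fun n => U (f n))); auto. intros; apply HU. }
  exists f. split; auto. exists (mK K u). split. apply mh_char; eauto.
  apply (conv_ext (fun n => mK K (U (f n)))). intros n. symmetry; apply HU.
  apply mK_cont; auto. intros; apply HU.
Qed.

Lemma mh_ne K : strictly_convex_body K -> exists m, middle_hedgehog K m.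
Proof. intros HK. exists (mK K (1,0)). apply mh_char; auto. exists (1,0). split; auto.
  unfold unit_vec, dot; simpl; ring. Qed.

Lemma mh_max K g : strictly_convex_body K -> seqcont g ->
  exists m, middle_hedgehog K m /\ forall m', middle_hedgehog K m' -> g m' <= g m.
Proof.
  intros HK Hg.
  assert (HB : exists B, forall m', middle_hedgehog K m' -> g m' <= B).
  { apply NNPP. intros Hc.
    assert (Hn : forall n, exists m', middle_hedgehog K m' /\ INR n < g m').
    { intros n. apply NNPP. intros H. apply Hc. exists (INR n). intros m' Hm'.
      apply Rnot_lt_le. intros Hl. apply H. exists m'. auto. }
    pose (Mq := fun n => proj1_sig (constructive_indefinite_description _ (Hn n))).
    assert (HM : forall n, middle_hedgehog K (Mq n) /\ INR n < g (Mq n)).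
    { intros n. unfold Mq. destruct (constructive_indefinite_description _ (Hn n)); simpl; auto. }
    destruct (mh_seq K Mq HK) as [f [Hf [ms [Hms Hc2]]]]. intros; apply HM.
    pose proof (Hg _ _ Hc2) as Hcv.
    destruct (Hcv 1) as [N HN]; [lra|].
    destruct (INR_archimed 1 (g ms + 1)) as [n0 Hn0]; [lra|].
    set (n := max N n0).
    specialize (HN n ltac:(unfold n; lia)). unfold R_dist in HN.
    pose proof (HM (f n)) as [_ H1].
    pose proof (incr_ge f Hf n). apply le_INR in H.
    assert (INR n0 <= INR n) by (apply le_INR; unfold n; lia).
    apply Rabs_def2 in HN. lra. }
  destruct HB as [B HB].
  set (E := fun v => exists m', middle_hedgehog K m' /\ v = g m').
  destruct (mh_ne K HK) as [m0 Hm0].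
  destruct (completeness E) as [s [Hs1 Hs2]].
  { exists B. intros v [m' [Hm' ->]]. auto. }
  { exists (g m0). exists m0; auto. }
  assert (Hn : forall n, exists m', middle_hedgehog K m' /\ s - / (INR n + 1) < g m').
  { intros n. apply NNPP. intros Hc.
    assert (is_upper_bound E (s - / (INR n + 1))).
    { intros v [y [Hy ->]]. apply Rnot_lt_le. intros Hl. apply Hc. exists y; auto. }
    apply Hs2 in H. pose proof (inv_pos n). lra. }
  pose (Mq := fun n => proj1_sig (constructive_indefinite_description _ (Hn n))).
  assert (HM : forall n, middle_hedgehog K (Mq n) /\ s - / (INR n + 1) < g (Mq n)).
  { intros n. unfold Mq. destruct (constructive_indefinite_description _ (Hn n)); simpl; auto. }
  destruct (mh_seq K Mq HK) as [f [Hf [ms [Hms Hc2]]]]. intros; apply HM.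
  exists ms. split; auto.
  assert (s <= g ms).
  { apply (@Rle_cv_lim (fun n => s - / (INR (f n) + 1)) (fun n => g (Mq (f n)))).
    - intros n. left. apply HM.
    - apply cv_s_inv; auto.
    - apply Hg; auto. }
  intros m' Hm'. assert (E (g m')) by (exists m'; auto). apply Hs1 in H0. lra.
Qed.

Lemma cv_Rmax a b la lb : Un_cv a la -> Un_cv b lb -> Un_cv (fun n => Rmax (a n) (b n)) (Rmax la lb).
Proof.
  intros Ha Hb e He. destruct (Ha e He) as [N1 H1]. destruct (Hb e He) as [N2 H2].
  exists (max N1 N2). intros n Hn. specialize (H1 n ltac:(lia)). specialize (H2 n ltac:(lia)).
  unfold R_dist in *. apply Rabs_def2 in H1. apply Rabs_def2 in H2. apply Rabs_def1;
  unfold Rmax; destruct (Rle_dec (a n) (b n)); destruct (Rle_dec la lb); lra.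
Qed.

Lemma sc_dot u : seqcont (fun m => dot m u).
Proof. intros a l H. apply (conv_dot a (fun _ => u)); auto. apply conv_const. Qed.

Lemma sc_nsq c : seqcont (fun m => dot (psub m c) (psub m c)).
Proof. intros a l H. apply conv_dot; apply conv_psub; auto; apply conv_const. Qed.

Lemma sc_chi A B u p : seqcont (fun m => - Rmax (A - dot m u) (B - dot (psub m p) (psub m p))).
Proof. intros a l H.
  apply (Un_cv_ext (opp_seq (fun n => Rmax (A - dot (a n) u) (B - dot (psub (a n) p) (psub (a n) p))))).
  intros; reflexivity. apply CV_opp. apply cv_Rmax; apply CV_minus; try apply cv_const.
  apply sc_dot; auto. apply sc_nsq; auto. Qed.

Lemma conv_in (M : pset) x : M x -> conv M x.
Proof. intros Hx C _ HC. auto. Qed.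

Lemma half_convex u s : is_convex (fun z => dot z u <= s).
Proof. intros x y t Hx Hy Ht. rewrite dot_padd, !dot_pscale. nra. Qed.

Lemma ball_convex c r2 : is_convex (fun z => dot (psub z c) (psub z c) <= r2).
Proof. intros x y t Hx Hy Ht.
  destruct x as [x1 x2]; destruct y as [y1 y2]; destruct c as [c1 c2].
  unfold dot, psub, padd, pscale, popp in *; cbn [fst snd] in *.
  assert (0 <= t * (1 - t) * ((x1 - y1)^2 + (x2-y2)^2)).
  { apply Rmult_le_pos. nra. pose proof (pow2_ge_0 (x1-y1)); pose proof (pow2_ge_0 (x2-y2)); lra. }
  assert (E : ((1 - t) * x1 + t * y1 + - c1) * ((1 - t) * x1 + t * y1 + - c1) +
    ((1 - t) * x2 + t * y2 + - c2) * ((1 - t) * x2 + t * y2 + - c2) =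
    (1-t) * ((x1 + - c1) * (x1 + - c1) + (x2 + - c2) * (x2 + - c2)) +
    t * ((y1 + - c1) * (y1 + - c1) + (y2 + - c2) * (y2 + - c2)) -
    t * (1 - t) * ((x1 - y1)^2 + (x2-y2)^2)) by ring.
  rewrite E. nra.
Qed.

Lemma nsq_pos x y : x <> y -> 0 < dot (psub x y) (psub x y).
Proof. intros H. destruct x as [x1 x2]; destruct y as [y1 y2].
  unfold dot, psub, padd, popp; cbn [fst snd].
  destruct (Req_dec x1 y1); destruct (Req_dec x2 y2).
  - subst. contradiction.
  - assert (0 < (x2 + - y2) * (x2 + - y2)). { apply Rsqr_pos_lt. lra. } nra.
  - assert (0 < (x1 + - y1) * (x1 + - y1)). { apply Rsqr_pos_lt. lra. } nra.
  - assert (0 < (x1 + - y1) * (x1 + - y1)). { apply Rsqr_pos_lt. lra. } nra.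
Qed.

Lemma d2_pos x y : x <> y -> 0 < dist2 x y.
Proof. intros H. pose proof (nsq_pos x y H). rewrite <- d2_nsq in H0.
  pose proof (d2_ge0 x y). destruct H1; auto. rewrite <- H1 in H0. lra. Qed.

Lemma sqrt_mono a b : 0 <= a -> 0 <= b -> a * a <= b * b -> a <= b.
Proof. intros. nra. Qed.

Lemma ball_exposed (M : pset) q c : M q -> (forall m, M m -> dot (psub m c) (psub m c) <= dot (psub q c) (psub q c)) ->
  q <> c -> exposed_point (conv M) q.
Proof.
  intros Mq Hmax Hqc. split. apply conv_in; auto.
  exists (psub q c). split.
  - intros E. apply Hqc. destruct q as [q1 q2]; destruct c as [c1 c2].
    unfold psub, padd, popp in E; cbn [fst snd] in E. injection E. intros. f_equal; lra.
  - intros z Cz Hzq.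
    assert (Bz : dot (psub z c) (psub z c) <= dot (psub q c) (psub q c)).
    { apply (Cz (fun z => dot (psub z c) (psub z c) <= dot (psub q c) (psub q c))).
      apply ball_convex. auto. }
    pose proof (nsq_pos z q Hzq) as P.
    destruct z as [z1 z2]; destruct q as [q1 q2]; destruct c as [c1 c2].
    unfold dot, psub, padd, popp in *; cbn [fst snd] in *. nra.
Qed.

Lemma exposed_unit C p : exposed_point C p -> C p /\ exists u, unit_vec u /\
  forall y, C y -> y <> p -> dot y u < dot p u.
Proof.
  intros [Cp [u0 [Hu0 H]]]. split; auto.
  assert (P : 0 < dot u0 u0).
  { pose proof (nsq_pos u0 (0,0) Hu0). unfold dot, psub, padd, popp in *; cbn [fst snd] in *.
    replace (fst u0 + - 0) with (fst u0) in H0 by ring. replace (snd u0 + - 0) with (snd u0) in H0 by ring. lra. }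
  set (n := sqrt (dot u0 u0)).
  assert (Hn : 0 < n) by (apply sqrt_lt_R0; auto).
  assert (Hn2 : n * n = dot u0 u0) by (apply sqrt_sqrt; lra).
  exists (pscale (/ n) u0). split.
  - unfold unit_vec. rewrite dot_pscale, dot_comm, dot_pscale.
    rewrite <- Hn2. field. lra.
  - intros y Cy Hy. rewrite !(dot_comm _ (pscale _ _)), !dot_pscale, !(dot_comm u0).
    apply Rmult_lt_compat_l. apply Rinv_0_lt_compat; auto. apply H; auto.
Qed.

Lemma local K p r : strictly_convex_body K -> exposed_point (conv (middle_hedgehog K)) p -> 0 < r ->
  exists del, 0 < del /\ forall L, strictly_convex_body L -> hausdorff_lt K L del ->
  exists q, exposed_point (conv (middle_hedgehog L)) q /\ dist2 q p < r.
Proof.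
  intros HK Hp Hr. apply exposed_unit in Hp. destruct Hp as [Cp [u [Hu Hexp]]].
  assert (Mp : middle_hedgehog K p).
  { destruct (mh_max K (fun m => dot m u) HK (sc_dot u)) as [ms [Mms Hms]].
    assert (dot p u <= dot ms u).
    { apply (Cp (fun z => dot z u <= dot ms u)). apply half_convex. auto. }
    destruct (classic (ms = p)) as [E|E]. subst; auto.
    pose proof (Hexp ms (conv_in _ _ Mms) E). lra. }
  apply mh_char in Mp; auto. destruct Mp as [v [Hv Ep]].
  set (r1 := r / 2).
  destruct (mh_max K _ HK (sc_chi (dot p u) (r1 * r1) u p)) as [mo [Mmo Hmo]].
  set (g := Rmax (dot p u - dot mo u) (r1 * r1 - dot (psub mo p) (psub mo p))).
  assert (Hg : 0 < g).
  { apply Rnot_le_lt. intros Hle.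
    assert (r1 * r1 <= dot (psub mo p) (psub mo p)).
    { pose proof (Rmax_r (dot p u - dot mo u) (r1 * r1 - dot (psub mo p) (psub mo p))). fold g in H. lra. }
    assert (mo <> p). { intros ->. rewrite <- d2_nsq, d2_refl in H. unfold r1 in H. nra. }
    pose proof (Hexp mo (conv_in _ _ Mmo) H0).
    pose proof (Rmax_l (dot p u - dot mo u) (r1 * r1 - dot (psub mo p) (psub mo p))). fold g in H2. lra. }
  assert (Gap : forall m, middle_hedgehog K m -> r1 * r1 <= dot (psub m p) (psub m p) ->
     dot m u <= dot p u - g).
  { intros m Mm Hd. specialize (Hmo m Mm). cbv beta in Hmo. fold g in Hmo.
    unfold Rmax in Hmo. destruct (Rle_dec (dot p u - dot m u) (r1 * r1 - dot (psub m p) (psub m p))); lra. }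
  destruct (scb_bound K HK) as [R [HR0 HR]].
  set (D := 2 * R).
  assert (HD : forall m, middle_hedgehog K m -> dist2 m p <= D).
  { intros m Mm. pose proof (d2_tri m (0,0) p). rewrite (d2_sym (0,0) p) in H.
    pose proof (mh_bound K R m HK HR HR0 Mm). assert (middle_hedgehog K p) by (apply mh_char; eauto).
    pose proof (mh_bound K R p HK HR HR0 H1). unfold D. lra. }
  set (eps := Rmin (g / 4) (r / 2)).
  assert (Heps : 0 < eps) by (apply Rmin_pos; lra).
  assert (Heps1 : eps <= g / 4) by apply Rmin_l. assert (Heps2 : eps <= r / 2) by apply Rmin_r.
  destruct (mK_close K eps HK Heps) as [del [Hdel Hclose]].
  exists del. split; auto. intros L HL Hh.
  set (T := D * D / g + g + D + 1).
  assert (HT : T * g = D * D + g * g + g * D + g) by (unfold T; field; lra).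
  assert (HD0 : 0 <= D) by (unfold D; lra).
  assert (HTg : g + 1 <= T). { unfold T. assert (0 <= D * D / g) by (unfold Rdiv; apply Rmult_le_pos; [nra|left; apply Rinv_0_lt_compat; lra]). lra. }
  set (c := padd p (pscale (- T) u)).
  destruct (mh_max L _ HL (sc_nsq c)) as [q [Mq Hq]].
  set (p' := mK L v).
  assert (Mp' : middle_hedgehog L p') by (apply mh_char; eauto).
  assert (Dp' : dist2 p' p < eps) by (rewrite Ep; apply Hclose; auto).
  pose proof Mq as Mq'. apply mh_char in Mq'; auto. destruct Mq' as [w [Hw Eq]].
  set (m := mK K w).
  assert (Mm : middle_hedgehog K m) by (apply mh_char; eauto).
  assert (Dqm : dist2 q m < eps) by (rewrite Eq; apply Hclose; auto).
  assert (Dpc : dist2 p c = T).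
  { assert (dist2 p c * dist2 p c = T * T).
    { rewrite d2_nsq. unfold unit_vec in Hu. unfold c. destruct p as [p1 p2]; destruct u as [u1 u2].
      unfold dot, psub, padd, pscale, popp in *; cbn [fst snd] in *. nra. }
    pose proof (d2_ge0 p c). nra. }
  assert (Dp'c : T - eps <= dist2 p' c).
  { pose proof (d2_tri p p' c). rewrite d2_sym in Dp'. lra. }
  assert (Dqc : dist2 p' c <= dist2 q c).
  { apply sqrt_mono; try apply d2_ge0. rewrite !d2_nsq. apply Hq; auto. }
  assert (Dmc : T - g / 2 <= dist2 m c).
  { pose proof (d2_tri q m c). lra. }
  assert (Dmp : dist2 m p < r1).
  { apply Rnot_le_lt. intros Hle.
    assert (r1 * r1 <= dot (psub m p) (psub m p)).
    { rewrite <- d2_nsq. assert (0 < r1) by (unfold r1; lra). nra. }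
    pose proof (Gap m Mm H) as Gm.
    pose proof (HD m Mm) as Hmd. apply d2_sq_le in Hmd. rewrite <- d2_sq, d2_nsq in Hmd.
    assert (E2 : (T - g/2) * (T - g/2) <= dot (psub m c) (psub m c)).
    { rewrite <- d2_nsq. apply Rmult_le_compat; lra. }
    unfold unit_vec in Hu. unfold c in E2.
    destruct m as [m1 m2]; destruct p as [p1 p2]; destruct u as [u1 u2].
    unfold dot, psub, padd, pscale, popp in *; cbn [fst snd] in *.
    assert (EE : (m1 + - (p1 + - T * u1)) * (m1 + - (p1 + - T * u1)) +
      (m2 + - (p2 + - T * u2)) * (m2 + - (p2 + - T * u2)) =
      ((m1 + - p1) * (m1 + - p1) + (m2 + - p2) * (m2 + - p2)) +
      2 * T * ((m1 * u1 + m2 * u2) - (p1 * u1 + p2 * u2)) + T * T * (u1 * u1 + u2 * u2)) by ring.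
    rewrite EE, Hu in E2. nra. }
  exists q. split.
  - apply (ball_exposed _ q c); auto.
    intros Hqc. rewrite Hqc, d2_refl in Dqc. lra.
  - pose proof (d2_tri q m p). unfold r1 in Dmp. lra.
Qed.

Lemma exposed_list k C : ~ at_most_k_exposed k C -> forall n, (n <= S k)%nat ->
  exists l, NoDup l /\ length l = n /\ forall x, In x l -> exposed_point C x.
Proof.
  intros Hn n. induction n as [|n IH]; intros Hle.
  - exists nil. split. constructor. split. reflexivity. intros y [].
  - destruct (IH ltac:(lia)) as [l [Hl [Hlen Hx]]].
    destruct (classic (exists x, exposed_point C x /\ ~ In x l)) as [[x [Ex Nx]]|Hc].
    + exists (x :: l). split. constructor; auto. split. simpl; lia. intros y [<-|Hy]; auto.
    + exfalso. apply Hn. exists l. split. lia. intros x Ex. apply NNPP. intros Nx. apply Hc. eauto.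
Qed.

Lemma sep1 (l : list pt) x : exists r, 0 < r /\ forall b, In b l -> x <> b -> 2 * r <= dist2 x b.
Proof.
  induction l as [|y l IH].
  - exists 1. split. lra. intros b [].
  - destruct IH as [r [Hr H]].
    destruct (classic (x = y)) as [E|E].
    + exists r. split; auto. intros b [Eb|Hb] Hxb; [subst; contradiction|auto].
    + pose proof (d2_pos x y E). exists (Rmin r (dist2 x y / 2)). split. apply Rmin_pos; lra.
      intros b [Eb|Hb] Hxb.
      * subst b. pose proof (Rmin_r r (dist2 x y / 2)). lra.
      * pose proof (Rmin_l r (dist2 x y / 2)). pose proof (H b Hb Hxb). lra.
Qed.

Lemma sep (l : list pt) : exists r, 0 < r /\ forall a b, In a l -> In b l -> a <> b -> 2 * r <= dist2 a b.
Proof.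
  induction l as [|x l IH].
  - exists 1. split. lra. intros a b [].
  - destruct IH as [r0 [Hr0 H0]]. destruct (sep1 l x) as [r1 [Hr1 H1]].
    exists (Rmin r0 r1). split. apply Rmin_pos; lra.
    pose proof (Rmin_l r0 r1). pose proof (Rmin_r r0 r1).
    intros a b [Ea|Ha] [Eb|Hb] Hab.
    + subst. contradiction.
    + subst a. pose proof (H1 b Hb Hab). lra.
    + subst b. rewrite d2_sym. assert (x <> a) by auto. pose proof (H1 a Ha H3). lra.
    + pose proof (H0 a b Ha Hb Hab). lra.
Qed.

Lemma hlt_mono K L d d' : hausdorff_lt K L d -> d <= d' -> hausdorff_lt K L d'.
Proof. intros [x [[H0 H1] H2]] Hd. exists x. split; [split; lra|auto]. Qed.

Lemma multi K r : strictly_convex_body K -> 0 < r -> forall l,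
  (forall p, In p l -> exposed_point (conv (middle_hedgehog K)) p) ->
  exists del, 0 < del /\ forall L, strictly_convex_body L -> hausdorff_lt K L del ->
  exists l', Forall2 (fun p q => dist2 q p < r /\ exposed_point (conv (middle_hedgehog L)) q) l l'.
Proof.
  intros HK Hr l. induction l as [|p l IH]; intros Hl.
  - exists 1. split. lra. intros. exists nil. constructor.
  - destruct IH as [d2 [Hd2 H2]]. intros; apply Hl; simpl; auto.
    destruct (local K p r HK) as [d1 [Hd1 H1]]; auto. apply Hl; simpl; auto.
    exists (Rmin d1 d2). split. apply Rmin_pos; auto.
    intros L HL Hh.
    destruct (H1 L HL) as [q [Eq Dq]]. eapply hlt_mono; eauto. apply Rmin_l.
    destruct (H2 L HL) as [l' Hl']. eapply hlt_mono; eauto. apply Rmin_r.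
    exists (q :: l'). constructor; auto.
Qed.

Lemma Forall2_in_r {A B} (P : A -> B -> Prop) l l' y : Forall2 P l l' -> In y l' -> exists x, In x l /\ P x y.
Proof. intros H. induction H; simpl. intros []. intros [<-|Hy]. exists x; auto.
  destruct (IHForall2 Hy) as [z [Hz Pz]]. exists z; auto. Qed.

Lemma nodup_img r (L : pset) l l' : Forall2 (fun p q => dist2 q p < r /\ exposed_point (conv (middle_hedgehog L)) q) l l' ->
  NoDup l -> (forall a b, In a l -> In b l -> a <> b -> 2 * r <= dist2 a b) -> NoDup l'.
Proof.
  intros H. induction H as [|p q l l' Hpq H IH]; intros Hn Hs. constructor.
  inversion Hn; subst. constructor.
  - intros Hq. destruct (Forall2_in_r _ _ _ _ H Hq) as [p' [Hp' [Dp' _]]].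
    assert (p <> p') by (intros ->; contradiction).
    pose proof (Hs p p' (or_introl eq_refl) (or_intror Hp') H0).
    pose proof (d2_tri p q p'). rewrite (d2_sym p q) in H4. destruct Hpq. lra.
  - apply IH; auto. intros a b Ha Hb. apply Hs; simpl; auto.
Qed.

Theorem lemma2 : forall k : nat, closed_in_Kstar (A_k k).
Proof.
  intros k K HK HnA.
  assert (Hn : ~ at_most_k_exposed k (conv (middle_hedgehog K))).
  { intros H. apply HnA. split; auto. }
  destruct (exposed_list k _ Hn (S k) ltac:(lia)) as [l [Hnd [Hlen Hex]]].
  destruct (sep l) as [r [Hr Hs]].
  destruct (multi K r HK Hr l Hex) as [del [Hdel H]].
  exists del. split; auto. intros L HL Hh [_ [l'' [Hlen'' Hin]]].
  destruct (H L HL Hh) as [l' Hl'].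
  pose proof (nodup_img r L l l' Hl' Hnd Hs) as Hnd'.
  assert (incl l' l'').
  { intros q Hq. apply Hin. destruct (Forall2_in_r _ _ _ _ Hl' Hq) as [p [_ [_ E]]]. auto. }
  pose proof (NoDup_incl_length Hnd' H0).
  pose proof (Forall2_length Hl'). lia.
Qed.
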